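(* Consider the system $$\dot x=-y+x(x^3+xy^2)+\sum_{k=1}^2\varepsilon^k\Big(\lambda_kx+\sum_{i+j=4}a_{k,i,j}x^iy^j\Big),\qquad \dot y=x+y(x^3+xy^2)+\sum_{k=1}^2\varepsilon^k\Big(\lambda_ky+\sum_{i+j=4}b_{k,i,j}x^iy^j\Big)$$ with real coefficients. For $|\varepsilon|>0$ sufficiently small: (1) the first order averaging method yields at most three limit cycles bifurcating from the periodic orbits of the unperturbed system (the center at the origin of $\dot x=-y+x(x^3+xy^2)$, $\dot y=x+y(x^3+xy^2)$), and three is reached; (2) under the conditions $a_{1,1,3}=b_{1,0,4}$, $a_{1,3,1}=b_{1,2,2}$, $b_{1,4,0}=\lambda_1=0$ (so that $f_1\equiv0$) together with $a_{1,2,2}=b_{1,1,3}$, $a_{1,4,0}=b_{1,3,1}$, $a_{1,0,4}=0$, the second order averaging method yields at most three limit cycles, and three is reached. More precisely, under these conditions, with $z=\big[\frac{1-s^2}{3(1+s^2)}\big]^{1/3}$, $s\in(0,1)$, the second order averaged function equals $$\frac{\pi\,3^{2/3}(1-s)^{1/3}}{108(1+s)^{11/3}(1+s^2)^{4/3}}\big(H_1s^6+H_2s^5+H_3s^4+H_4s^3+H_3s^2+H_2s+H_1\big),$$ where $H_1=3a_{2,1,3}+a_{2,3,1}-3b_{2,0,4}-b_{2,2,2}-3b_{2,4,0}+72\lambda_2$, $H_2=-4a_{2,1,3}+4b_{2,0,4}+4a_{2,3,1}-4b_{2,2,2}-12b_{2,4,0}+288\lambda_2$, $H_3=5a_{2,1,3}-9a_{2,3,1}-5b_{2,0,4}+9b_{2,2,2}-5b_{2,4,0}+504\lambda_2$,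 $H_4=-8a_{2,1,3}+8a_{2,3,1}+8b_{2,0,4}-8b_{2,2,2}+40b_{2,4,0}+576\lambda_2$.
   Context: Averaging framework. In polar coordinates $x=r\cos\theta$, $y=r\sin\theta$ expand $dr/d\theta=F_0(\theta,r)+\varepsilon F_1(\theta,r)+\varepsilon^2F_2(\theta,r)+O(\varepsilon^3)$; here $F_0=r^4\cos\theta$. Let $r(\theta,z)=z(1-3z^3\sin\theta)^{-1/3}$ (solution of $dr/d\theta=F_0$, $r(0)=z$, $2\pi$-periodic and positive for $z\in D=(0,3^{-1/3})$) and $Y(\theta,z)=(1-3z^3\sin\theta)^{-4/3}$ (solution of $Y'=\partial_rF_0(\theta,r(\theta,z))Y$, $Y(0)=1$). Define $y_1(\theta,z)=Y(\theta,z)\int_0^\theta Y^{-1}F_1\,ds$ and $y_2(\theta,z)=Y(\theta,z)\int_0^\theta Y^{-1}\big(2F_2+\partial_r^2F_0\,y_1^2+2\partial_rF_1\,y_1\big)ds$, with $F_j$ evaluated at $(s,r(s,z))$. The averaged functions are $f_1(z)=y_1(2\pi,z)$, $f_2(z)=y_2(2\pi,z)/2$. By the averaging theorem, if $f_1\equiv\dots\equiv f_{j-1}\equiv0$ and $z^*\in D$ is a simple zero of $f_j$, then for $|\varepsilon|$ small the system has a limit cycle tending to the periodic orbit through $(z^*,0)$. ''The $j$-th order averaging method yields at most $n$ limit cycles, and $n$ is reached'' means that over all admissible coefficient choices with $f_1\equiv\dots\equiv f_{j-1}\equiv 0$, $f_j\not\equiv0$, the function $f_j$ has at most $n$ simple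 zeros in $D$, and some choice gives exactly $n$. *)

(* Defs.v *)
From Stdlib Require Import Reals Lra List.
From Coquelicot Require Import Coquelicot.
Open Scope R_scope.

(* Coefficients of the perturbation.
   lam k      = lambda_k
   ca k i j   = a_{k,i,j}
   cb k i j   = b_{k,i,j}
   Only k in {1,2} and i+j = 4 are ever used. *)
Record coeffs := mkCoeffs {
  lam : nat -> R;
  ca  : nat -> nat -> nat -> R;
  cb  : nat -> nat -> nat -> R }.

Definition quartic (c : nat -> nat -> R) (x y : R) : R :=
  sum_f_R0 (fun i => c i (4 - i)%nat * x ^ i * y ^ (4 - i)) 4.

Definition Pk (C : coeffs) (k : nat) (x y : R) : R :=
  lam C k * x + quartic (ca C k) x y.
Definition Qk (C : coeffs) (k : nat) (x y : R) : R :=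
  lam C k * y + quartic (cb C k) x y.

Definition xdot (C : coeffs) (eps x y : R) : R :=
  - y + x * (x ^ 3 + x * y ^ 2) + (eps * Pk C 1 x y + eps ^ 2 * Pk C 2 x y).
Definition ydot (C : coeffs) (eps x y : R) : R :=
  x + y * (x ^ 3 + x * y ^ 2) + (eps * Qk C 1 x y + eps ^ 2 * Qk C 2 x y).

Definition drdth (C : coeffs) (th r eps : R) : R :=
  let x := r * cos th in
  let y := r * sin th in
  ((x * xdot C eps x y + y * ydot C eps x y) / r)
  / ((x * ydot C eps x y - y * xdot C eps x y) / r ^ 2).

Definition Fk (C : coeffs) (k : nat) (th r : R) : R :=
  Derive_n (fun e => drdth C th r e) k 0 / INR (Factorial.fact k).

Definition rsol (th z : R) : R := z * Rpower (1 - 3 * z ^ 3 * sin th) (- (1/3)).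
Definition Ysol (th z : R) : R := Rpower (1 - 3 * z ^ 3 * sin th) (- (4/3)).

Definition y1 (C : coeffs) (th z : R) : R :=
  Ysol th z * RInt (fun s => / Ysol s z * Fk C 1 s (rsol s z)) 0 th.

Definition y2 (C : coeffs) (th z : R) : R :=
  Ysol th z * RInt (fun s => / Ysol s z *
     (2 * Fk C 2 s (rsol s z)
      + Derive_n (fun r => Fk C 0 s r) 2 (rsol s z) * (y1 C s z) ^ 2
      + 2 * Derive (fun r => Fk C 1 s r) (rsol s z) * y1 C s z)) 0 th.

Definition f1 (C : coeffs) (z : R) : R := y1 C (2 * PI) z.
Definition f2 (C : coeffs) (z : R) : R := y2 C (2 * PI) z / 2.

Definition inD (z : R) : Prop := 0 < z < Rpower 3 (- (1/3)).

Definition simple_zero (f : R -> R) (z : R) : Prop :=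
  f z = 0 /\ ex_derive f z /\ Derive f z <> 0.

Definition nonzero_on_D (f : R -> R) : Prop := exists z, inD z /\ f z <> 0.
Definition zero_on_D (f : R -> R) : Prop := forall z, inD z -> f z = 0.

Definition at_most_simple_zeros (f : R -> R) (n : nat) : Prop :=
  forall l : list R, NoDup l -> (forall z, In z l -> inD z /\ simple_zero f z) ->
    (length l <= n)%nat.

Definition has_simple_zeros (f : R -> R) (n : nat) : Prop :=
  exists l : list R, NoDup l /\ length l = n /\
    (forall z, In z l -> inD z /\ simple_zero f z).

(* "the averaging method of order given by fj, over admissible coefficients Adm
   (which include f_1 = ... = f_{j-1} = 0), yields at most n limit cycles, and n is
   reached" *)
Definition averaging_yields_exactly (Adm : coeffs -> Prop) (fj : coeffs -> R -> R)
  (n : nat) : Prop :=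
  (forall C, Adm C -> nonzero_on_D (fj C) -> at_most_simple_zeros (fj C) n) /\
  (exists C, Adm C /\ nonzero_on_D (fj C) /\ has_simple_zeros (fj C) n).

Definition cond2 (C : coeffs) : Prop :=
  ca C 1 1 3 = cb C 1 0 4 /\ ca C 1 3 1 = cb C 1 2 2 /\
  cb C 1 4 0 = 0 /\ lam C 1 = 0 /\
  ca C 1 2 2 = cb C 1 1 3 /\ ca C 1 4 0 = cb C 1 3 1 /\ ca C 1 0 4 = 0.

Definition H1 (C : coeffs) : R :=
  3 * ca C 2 1 3 + ca C 2 3 1 - 3 * cb C 2 0 4 - cb C 2 2 2 - 3 * cb C 2 4 0
  + 72 * lam C 2.
Definition H2 (C : coeffs) : R :=
  -4 * ca C 2 1 3 + 4 * cb C 2 0 4 + 4 * ca C 2 3 1 - 4 * cb C 2 2 2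
  - 12 * cb C 2 4 0 + 288 * lam C 2.
Definition H3 (C : coeffs) : R :=
  5 * ca C 2 1 3 - 9 * ca C 2 3 1 - 5 * cb C 2 0 4 + 9 * cb C 2 2 2
  - 5 * cb C 2 4 0 + 504 * lam C 2.
Definition H4 (C : coeffs) : R :=
  -8 * ca C 2 1 3 + 8 * ca C 2 3 1 + 8 * cb C 2 0 4 - 8 * cb C 2 2 2
  + 40 * cb C 2 4 0 + 576 * lam C 2.

Definition zofs (s : R) : R := Rpower ((1 - s ^ 2) / (3 * (1 + s ^ 2))) (1/3).

Definition f2_formula (C : coeffs) (s : R) : R :=
  PI * Rpower 3 (2/3) * Rpower (1 - s) (1/3)
  / (108 * Rpower (1 + s) (11/3) * Rpower (1 + s ^ 2) (4/3))
  * (H1 C * s ^ 6 + H2 C * s ^ 5 + H3 C * s ^ 4 + H4 C * s ^ 3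
     + H3 C * s ^ 2 + H2 C * s + H1 C).

(* Main.v *)
Require Import Defs.
From Stdlib Require Import Reals Lra Lia List Arith Nsatz.
From Coquelicot Require Import Coquelicot.
Open Scope R_scope.


Definition ratf (r n0 n1 n2 d0 d1 d2 e : R) : R :=
  r*(n0+e*n1+e^2*n2)/(d0+e*d1+e^2*d2).

Lemma den_loc (d0 d1 d2 : R) : d0 <> 0 ->
  locally 0 (fun e => d0+e*d1+e^2*d2 <> 0).
Proof.
  intros Hd.
  assert (Hc : continuous (fun e => d0+e*d1+e^2*d2) 0).
  { apply (ex_derive_continuous (K:=R_AbsRing) (V:=R_NormedModule)). auto_derive. exact I. }
  assert (Hl : locally (d0+0*d1+0^2*d2) (fun y => y <> 0)).
  { replace (d0+0*d1+0^2*d2) with d0 by ring.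
    apply (locally_interval _ d0 (d0 - Rabs d0) (d0 + Rabs d0)).
    - simpl. generalize (Rabs_pos_lt d0 Hd); lra.
    - simpl. generalize (Rabs_pos_lt d0 Hd); lra.
    - simpl. intros y H1 H2 Hy. subst y.
      destruct (Rle_or_lt 0 d0).
      + rewrite Rabs_right in H1; lra.
      + rewrite Rabs_left in H2; lra. }
  exact (Hc _ Hl).
Qed.

Lemma ratf_D0 r n0 n1 n2 d0 d1 d2 e : d0+e*d1+e^2*d2 <> 0 ->
  is_derive (ratf r n0 n1 n2 d0 d1 d2) e
   (r*((n1+2*e*n2)*(d0+e*d1+e^2*d2) - (n0+e*n1+e^2*n2)*(d1+2*e*d2))
     /(d0+e*d1+e^2*d2)^2).
Proof.
  intros H. unfold ratf. auto_derive. exact H. field. exact H.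
Qed.

Lemma ratf_D1 r n0 n1 n2 d0 d1 d2 : d0 <> 0 ->
  Derive_n (ratf r n0 n1 n2 d0 d1 d2) 1 0 = r*(n1*d0 - n0*d1)/d0^2.
Proof.
  intros H. change (Derive (ratf r n0 n1 n2 d0 d1 d2) 0 = r*(n1*d0 - n0*d1)/d0^2).
  rewrite (is_derive_unique _ _ _ (ratf_D0 r n0 n1 n2 d0 d1 d2 0 ltac:(replace (d0 + 0 * d1 + 0 ^ 2 * d2) with d0 by ring; exact H))).
  field. exact H.
Qed.

Lemma ratf_D2 r n0 n1 n2 d0 d1 d2 : d0 <> 0 ->
  Derive_n (ratf r n0 n1 n2 d0 d1 d2) 2 0 =
  2*r*(n2/d0 - (n1*d1+n0*d2)/d0^2 + n0*d1^2/d0^3).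
Proof.
  intros H. change (Derive (Derive (ratf r n0 n1 n2 d0 d1 d2)) 0 = 
    2*r*(n2/d0 - (n1*d1+n0*d2)/d0^2 + n0*d1^2/d0^3)).
  set (g := fun e => r*((n1+2*e*n2)*(d0+e*d1+e^2*d2) - (n0+e*n1+e^2*n2)*(d1+2*e*d2))
     /(d0+e*d1+e^2*d2)^2).
  rewrite (Derive_ext_loc _ g).
  2: { generalize (den_loc d0 d1 d2 H). apply filter_imp. intros e He.
       exact (is_derive_unique _ _ _ (ratf_D0 r n0 n1 n2 d0 d1 d2 e He)). }
  unfold g. apply is_derive_unique. auto_derive.
  replace (d0 + 0 * d1 + 0 * (0 * 1) * d2) with d0 by ring.
  intro Hx; apply H; nra.
  field. exact H.
Qed.

Definition hpoly (C : coeffs) k c S :=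
  cb C k 0 4 * S^5 + (ca C k 0 4 + cb C k 1 3)*c*S^4 + (ca C k 1 3 + cb C k 2 2)*c^2*S^3
  + (ca C k 2 2 + cb C k 3 1)*c^3*S^2 + (ca C k 3 1 + cb C k 4 0)*c^4*S + ca C k 4 0 * c^5.
Definition ee0 C k := cb C k 4 0.
Definition ee1 C k := cb C k 3 1 - ca C k 4 0.
Definition ee2 C k := cb C k 2 2 - ca C k 3 1.
Definition ee3 C k := cb C k 1 3 - ca C k 2 2.
Definition ee4 C k := cb C k 0 4 - ca C k 1 3.
Definition ee5 C k := - ca C k 0 4.
Definition kpoly (C : coeffs) k c S :=
  ee0 C k*c^5 + ee1 C k*c^4*S + ee2 C k*c^3*S^2 + ee3 C k*c^2*S^3 + ee4 C k*c*S^4 + ee5 C k*S^5.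

Definition Fgen C k th r :=
  lam C k * r + r^4 * hpoly C k (cos th) (sin th) - r^7 * cos th * kpoly C k (cos th) (sin th).

Section NN.
Variables (C : coeffs) (th r : R).
Let x := r * cos th.
Let y := r * sin th.
Definition nn k := x * Pk C k x y + y * Qk C k x y.
Definition dd k := x * Qk C k x y - y * Pk C k x y.
Definition nn0 := x*(-y + x*(x^3+x*y^2)) + y*(x + y*(x^3+x*y^2)).
Definition dd0 := x*(x + y*(x^3+x*y^2)) - y*(-y + x*(x^3+x*y^2)).
End NN.

Lemma trig1 th : cos th ^ 2 + sin th ^ 2 = 1.
Proof. rewrite Rplus_comm. generalize (sin2_cos2 th). unfold Rsqr. simpl. intro H. rewrite !Rmult_1_r. exact H. Qed.

Lemma nn_eq C th r k : nn C th r k = lam C k * r^2 + r^5 * hpoly C k (cos th) (sin th).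
Proof.
  generalize (trig1 th). unfold nn, Pk, Qk, quartic, hpoly.
  generalize (cos th) (sin th). intros c S H. simpl in *. nsatz.
Qed.

Lemma dd_eq C th r k : dd C th r k = r^5 * kpoly C k (cos th) (sin th).
Proof.
  unfold dd, Pk, Qk, quartic, kpoly, ee0, ee1, ee2, ee3, ee4, ee5. simpl. ring.
Qed.

Lemma nn0_eq th r : nn0 th r = r^5 * cos th.
Proof.
  generalize (trig1 th). unfold nn0. generalize (cos th) (sin th). intros c S H. simpl in *. nsatz.
Qed.
Lemma dd0_eq th r : dd0 th r = r^2.
Proof.
  generalize (trig1 th). unfold dd0. generalize (cos th) (sin th). intros c S H. simpl in *. nsatz.
Qed.

Lemma drdth_ratf C th r e : r <> 0 ->
  drdth C th r e = ratf r (nn0 th r) (nn C th r 1) (nn C th r 2) (dd0 th r) (dd C th r 1) (dd C th r 2) e.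
Proof.
  intros Hr. unfold drdth, ratf, nn0, nn, dd0, dd, xdot, ydot. simpl.
  set (x := r * cos th). set (y := r * sin th).
  set (N := x * (- y + x * (x * (x * (x * 1)) + x * (y * (y * 1))) +
     (e * Pk C 1 x y + e * (e * 1) * Pk C 2 x y)) +
     y * (x + y * (x * (x * (x * 1)) + x * (y * (y * 1))) +
     (e * Qk C 1 x y + e * (e * 1) * Qk C 2 x y))).
  set (D := x * (x + y * (x * (x * (x * 1)) + x * (y * (y * 1))) +
     (e * Qk C 1 x y + e * (e * 1) * Qk C 2 x y)) -
     y * (- y + x * (x * (x * (x * 1)) + x * (y * (y * 1))) +
     (e * Pk C 1 x y + e * (e * 1) * Pk C 2 x y))).
  replace (x * (- y + x * (x * (x * (x * 1)) + x * (y * (y * 1)))) +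
    y * (x + y * (x * (x * (x * 1)) + x * (y * (y * 1)))) +
    e * (x * Pk C 1 x y + y * Qk C 1 x y) +
    e * (e * 1) * (x * Pk C 2 x y + y * Qk C 2 x y)) with N by (unfold N; ring).
  replace (x * (x + y * (x * (x * (x * 1)) + x * (y * (y * 1)))) -
    y * (- y + x * (x * (x * (x * 1)) + x * (y * (y * 1)))) +
    e * (x * Qk C 1 x y - y * Pk C 1 x y) +
    e * (e * 1) * (x * Qk C 2 x y - y * Pk C 2 x y)) with D by (unfold D; ring).
  unfold Rdiv. rewrite Rinv_mult, Rinv_inv.
  replace (N * / r * (/ D * (r * (r * 1)))) with (N * /D * (r * (r * /r))) by ring.
  rewrite Rinv_r by exact Hr. ring.
Qed.

Lemma Fk_ext C k th r : r <> 0 ->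
  Fk C k th r = Derive_n (ratf r (nn0 th r) (nn C th r 1) (nn C th r 2) (dd0 th r) (dd C th r 1) (dd C th r 2)) k 0
                / INR (Factorial.fact k).
Proof.
  intros Hr. unfold Fk. f_equal. apply Derive_n_ext. intro e. apply drdth_ratf; exact Hr.
Qed.

Lemma F0_eq C th r : r <> 0 -> Fk C 0 th r = r^4 * cos th.
Proof.
  intros Hr. rewrite Fk_ext by exact Hr. simpl Derive_n. unfold ratf.
  rewrite nn0_eq, dd0_eq. simpl. field. exact Hr.
Qed.

Lemma F1_eq C th r : r <> 0 -> Fk C 1 th r = Fgen C 1 th r.
Proof.
  intros Hr. rewrite Fk_ext by exact Hr. rewrite ratf_D1.
  2: { rewrite dd0_eq. apply pow_nonzero. exact Hr. }
  rewrite nn0_eq, dd0_eq, nn_eq, dd_eq. unfold Fgen. simpl. field. exact Hr.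
Qed.

Lemma F2_eq C th r : r <> 0 -> kpoly C 1 (cos th) (sin th) = 0 -> Fk C 2 th r = Fgen C 2 th r.
Proof.
  intros Hr Hk. rewrite Fk_ext by exact Hr. rewrite ratf_D2.
  2: { rewrite dd0_eq. apply pow_nonzero. exact Hr. }
  rewrite nn0_eq, dd0_eq, nn_eq, dd_eq, dd_eq, Hk. unfold Fgen. simpl. field. exact Hr.
Qed.

Lemma loc_pos r0 : 0 < r0 -> locally r0 (fun r => 0 < r).
Proof.
  intros H. apply (locally_interval _ r0 0 (r0+1)); simpl; try lra.
  intros y H1 H2; exact H1.
Qed.

Lemma D2F0 C s r0 : 0 < r0 -> Derive_n (fun r => Fk C 0 s r) 2 r0 = 12 * r0^2 * cos s.
Proof.
  intros H. rewrite (Derive_n_ext_loc _ (fun r => r^4 * cos s)).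
  2: { generalize (loc_pos r0 H). apply filter_imp. intros r Hr. apply F0_eq. lra. }
  apply is_derive_n_unique. apply is_derive_n_scal_r.
  replace (12 * r0^2) with (INR (Factorial.fact 4) / INR (Factorial.fact (4 - 2)) * r0 ^ (4 - 2)).
  apply is_derive_n_pow_smalli. auto.
  simpl. field.
Qed.

Lemma DF1 C s r0 : 0 < r0 -> Derive (fun r => Fk C 1 s r) r0 =
  lam C 1 + 4 * r0^3 * hpoly C 1 (cos s) (sin s) - 7 * r0^6 * cos s * kpoly C 1 (cos s) (sin s).
Proof.
  intros H. rewrite (Derive_ext_loc _ (fun r => Fgen C 1 s r)).
  2: { generalize (loc_pos r0 H). apply filter_imp. intros r Hr. apply F1_eq. lra. }
  apply is_derive_unique. unfold Fgen. auto_derive. exact I. ring.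
Qed.

Definition IntGen C k z a s :=
  lam C k * z * (1 - a*sin s) + z^4 * hpoly C k (cos s) (sin s)
  - z^7 * cos s * kpoly C k (cos s) (sin s) / (1 - a * sin s).

Lemma wpos z s : 0 < z -> 3*z^3 < 1 -> 0 < 1 - 3*z^3*sin s.
Proof.
  intros Hz H3. generalize (SIN_bound s). intros [H1 H2].
  assert (0 < z^3) by (apply pow_lt; lra). nra.
Qed.

Lemma rho_pos s z : 0 < Rpower (1 - 3*z^3*sin s) (-(1/3)).
Proof. unfold Rpower; apply exp_pos. Qed.

Lemma Ysol_eq s z : 0 < z -> 3*z^3 < 1 -> Ysol s z = (Rpower (1 - 3*z^3*sin s) (-(1/3)))^4.
Proof.
  intros Hz H3. unfold Ysol. rewrite <- (Rpower_pow 4 _ (rho_pos s z)).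
  rewrite Rpower_mult. f_equal. simpl. field.
Qed.

Lemma rho3 s z : 0 < z -> 3*z^3 < 1 -> (Rpower (1 - 3*z^3*sin s) (-(1/3)))^3 = / (1 - 3*z^3*sin s).
Proof.
  intros Hz H3. rewrite <- (Rpower_pow 3 _ (rho_pos s z)).
  rewrite Rpower_mult. replace (- (1/3) * INR 3) with (Ropp 1) by (simpl; field).
  rewrite Rpower_Ropp, Rpower_1. reflexivity. apply wpos; assumption.
Qed.


Lemma integrand_gen C k s z r :
  0 < z -> 3*z^3 < 1 -> r = Rpower (1 - 3*z^3*sin s) (-(1/3)) ->
  / r^4 * Fgen C k s (z * r) = IntGen C k z (3*z^3) s.
Proof.
  intros Hz H3 Hr.
  assert (Hw : 1 - 3*z^3*sin s = / r^3) by (rewrite Hr, rho3; [rewrite Rinv_inv; reflexivity| |]; assumption).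
  assert (Hr0 : r <> 0) by (rewrite Hr; apply Rgt_not_eq, rho_pos).
  unfold IntGen, Fgen. rewrite Hw. field. exact Hr0.
Qed.

Lemma integrand1 C s z : 0 < z -> 3*z^3 < 1 ->
  / Ysol s z * Fk C 1 s (rsol s z) = IntGen C 1 z (3*z^3) s.
Proof.
  intros Hz H3. rewrite Ysol_eq by assumption. rewrite F1_eq.
  2: { unfold rsol. apply Rgt_not_eq. apply Rmult_lt_0_compat. exact Hz. apply rho_pos. }
  unfold rsol. apply integrand_gen; auto.
Qed.

Lemma trig_param c S : c^2+S^2=1 -> (c = -1 /\ S = 0) \/ (exists t, c = (1-t^2)/(1+t^2) /\ S = 2*t/(1+t^2)).
Proof.
  intros H. destruct (Req_dec c (-1)) as [E|E].
  - left. split; auto. subst. nra.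
  - right. exists (S/(1+c)).
    assert (1 + c <> 0) by lra.
    assert (Hd: 1 + (S/(1+c))^2 = 2/(1+c)).
    { replace (1 + (S/(1+c))^2) with ((1 + 2*c + (c^2+S^2))/(1+c)^2) by (field; auto).
      rewrite H. field. auto. }
    rewrite Hd. split.
    + replace ((S/(1+c))^2) with (2/(1+c) - 1) by lra. field. auto.
    + field. auto.
Qed.
Definition Hprim C k s :=
  let c := cos s in let S := sin s in
  cb C k 0 4 * (-(c - 2*c^3/3 + c^5/5)) + (ca C k 0 4 + cb C k 1 3)*(S^5/5)
  + (ca C k 1 3 + cb C k 2 2)*(-(c^3/3 - c^5/5)) + (ca C k 2 2 + cb C k 3 1)*(S^3/3 - S^5/5)
  + (ca C k 3 1 + cb C k 4 0)*(-c^5/5) + ca C k 4 0 * (S - 2*S^3/3 + S^5/5).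

Lemma Hprim_deriv C k s : is_derive (Hprim C k) s (hpoly C k (cos s) (sin s)).
Proof.
  unfold Hprim. auto_derive. exact I.
  generalize (trig1 s). unfold hpoly. generalize (cos s) (sin s). intros c S H.
  destruct (trig_param c S H) as [[-> ->]|[t [-> ->]]]. ring.
  field. nra.
Qed.
Definition bb a := sqrt (1 - a^2).
Definition beta a := a / (1 + bb a).
Definition Phi a s := s - 2 * atan (beta a * cos s / (1 - beta a * sin s)).

Lemma bb_facts a : 0 < a < 1 -> 0 < bb a /\ bb a ^ 2 = 1 - a^2.
Proof.
  intros Ha. unfold bb. split.
  apply sqrt_lt_R0. nra.
  rewrite <- Rsqr_pow2. apply Rsqr_sqrt. nra.
Qed.

Lemma beta_lt a : 0 < a < 1 -> 0 < beta a < 1.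
Proof.
  intros Ha. destruct (bb_facts a Ha) as [H1 H2]. unfold beta.
  split. apply Rdiv_lt_0_compat; lra.
  apply Rmult_lt_reg_r with (1 + bb a). lra.
  unfold Rdiv. rewrite Rmult_assoc, Rinv_l by lra. lra.
Qed.

Lemma phi_alg a b be c S : 0 < a < 1 -> 0 < b -> b^2 = 1 - a^2 -> be * (1 + b) = a ->
  0 < be < 1 -> c^2 + S^2 = 1 -> -1 <= S <= 1 ->
  1 + - (2 * ((be * (1 * - S) * / (1 + - (be * S)) +
     be * c * (- - (be * (1 * c)) * / ((1 + - (be * S)) * (1 + - (be * S))))) *
    / (1 + be * c * / (1 + - (be * S)) * (be * c * / (1 + - (be * S)) * 1)))) =
  b / (1 - a * S).
Proof.
  intros Ha Hb Hb2 Hbe Hbe1 Htr HS.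
  assert (H1 : 0 < 1 - be * S) by nra.
  assert (H3 : 0 < 1 + be^2 - 2*be*S) by nra.
  assert (H4 : 0 < 1 - a * S) by nra.
  assert (H5 : (1 - be*S)^2 + be^2*c^2 = 1 + be^2 - 2*be*S) by (replace (c^2) with (1 - S^2) by lra; ring).
  transitivity (1 - 2*be*(be*c^2 - S*(1-be*S))/((1-be*S)^2 + be^2*c^2)).
  { field. split; nra. }
  rewrite H5. replace (c^2) with (1 - S^2) by lra.
  assert (Hbe2 : be^2 * (1+b) = 1 - b).
  { apply Rmult_eq_reg_r with (1+b). 2: lra.
    replace (be^2*(1+b)*(1+b)) with ((be*(1+b))^2) by ring. rewrite Hbe. nra. }
  subst a.
  transitivity ((1-be^2)/(1+be^2-2*be*S)). { field. lra. }
  assert (K : (1-be^2)*(1-be*(1+b)*S)*(1+b) = b*(1+be^2-2*be*S)*(1+b)).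
  { replace ((1-be^2)*(1-be*(1+b)*S)*(1+b)) with (((1+b) - be^2*(1+b))*(1-be*(1+b)*S)) by ring.
    rewrite Hbe2. replace (b*(1+be^2-2*be*S)*(1+b)) with (b*((1+b) + be^2*(1+b) - 2*be*(1+b)*S)) by ring.
    rewrite Hbe2. ring. }
  apply Rmult_eq_reg_r in K; [|lra].
  replace (b / (1 - be*(1+b)*S)) with ((1-be^2)*(1-be*(1+b)*S)/((1+be^2-2*be*S)*(1-be*(1+b)*S))).
  field. split; lra.
  rewrite K. field. split; lra.
Qed.

Lemma Phi_deriv a s : 0 < a < 1 -> is_derive (Phi a) s (bb a / (1 - a * sin s)).
Proof.
  intros Ha. destruct (bb_facts a Ha) as [Hb1 Hb2]. destruct (beta_lt a Ha) as [Hb3 Hb4].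
  generalize (SIN_bound s) (trig1 s). intros [Hs1 Hs2] Htr.
  assert (H1 : 0 < 1 - beta a * sin s) by nra.
  unfold Phi. auto_derive. lra.
  apply phi_alg; auto. unfold beta. field. lra.
Qed.

Definition Keven a q0 q1 q2 q3 q4 q5 kap s :=
  q0*s + q1*(-cos s) + q2*((s - sin s*cos s)/2) + q3*(-cos s + cos s^3/3)
  + q4*(3*(s - sin s * cos s)/8 - sin s^3*cos s/4) + q5*(-cos s + 2*cos s^3/3 - cos s^5/5)
  + kap/bb a * Phi a s.

Lemma Keven_deriv a q0 q1 q2 q3 q4 q5 kap s : 0 < a < 1 ->
  is_derive (Keven a q0 q1 q2 q3 q4 q5 kap) s
   (q0 + q1*sin s + q2*sin s^2 + q3*sin s^3 + q4*sin s^4 + q5*sin s^5 + kap/(1 - a*sin s)).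
Proof.
  intros Ha. destruct (bb_facts a Ha) as [Hb1 Hb2].
  generalize (SIN_bound s). intros [Hs1 Hs2].
  assert (H4 : 0 < 1 - a * sin s) by nra.
  unfold Keven. auto_derive.
  { repeat split; auto. exists (bb a / (1 - a * sin s)). apply Phi_deriv; auto. }
  replace (Derive (fun x : R => Phi a x) s) with (bb a / (1 - a*sin s))
    by (symmetry; apply is_derive_unique; apply Phi_deriv; auto).
  generalize (trig1 s). revert H4 Hb1. generalize (cos s) (sin s) (bb a). intros c S b H4 Hb1 H.
  destruct (trig_param c S H) as [[-> ->]|[t [-> ->]]].
  - field. lra.
  - assert (Ht : 0 < 1 + t^2) by nra.
    assert (0 < 1 + t^2 - a*(2*t)).
    { replace (1 + t^2 - a*(2*t)) with ((1+t^2)*(1 - a*(2*t/(1+t^2)))) by (field; lra). nra. }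
    field. repeat split; lra.
Qed.

Definition Kodd a q0 q1 q2 q3 q4 g s :=
  q0*sin s + q1*sin s^2/2 + q2*sin s^3/3 + q3*sin s^4/4 + q4*sin s^5/5 - g/a*ln(1 - a*sin s).

Lemma Kodd_deriv a q0 q1 q2 q3 q4 g s : 0 < a < 1 ->
  is_derive (Kodd a q0 q1 q2 q3 q4 g) s
   (cos s * (q0 + q1*sin s + q2*sin s^2 + q3*sin s^3 + q4*sin s^4 + g/(1 - a*sin s))).
Proof.
  intros Ha. generalize (SIN_bound s). intros [Hs1 Hs2].
  assert (H4 : 0 < 1 - a * sin s) by nra.
  unfold Kodd. auto_derive. lra. field. lra.
Qed.

Definition K0 a s := Keven a (1/a^6 - 3/a^4 + 3/a^2) (1/a^5 - 3/a^3 + 3/a) (1/a^4 - 3/a^2)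
   (1/a^3 - 3/a) (1/a^2) (1/a) (-1/a^6 + 3/a^4 - 3/a^2 + 1) s.
Definition K2 a s := Keven a (-1/a^6 + 2/a^4 - 1/a^2) (-1/a^5 + 2/a^3 - 1/a) (-1/a^4 + 2/a^2)
   (-1/a^3 + 2/a) (-1/a^2) (-1/a) (1/a^6 - 2/a^4 + 1/a^2) s.
Definition K4 a s := Keven a (1/a^6 - 1/a^4) (1/a^5 - 1/a^3) (1/a^4 - 1/a^2) (1/a^3 - 1/a)
   (1/a^2) (1/a) (-1/a^6 + 1/a^4) s.
Definition K1 a s := Kodd a (-1/a^5 + 2/a^3 - 1/a) (-1/a^4 + 2/a^2) (-1/a^3 + 2/a) (-1/a^2) (-1/a)
   (1/a^5 - 2/a^3 + 1/a) s.
Definition K3 a s := Kodd a (1/a^5 - 1/a^3) (1/a^4 - 1/a^2) (1/a^3 - 1/a) (1/a^2) (1/a)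
   (-1/a^5 + 1/a^3) s.
Definition K5 a s := Kodd a (-1/a^5) (-1/a^4) (-1/a^3) (-1/a^2) (-1/a) (1/a^5) s.


Lemma K0_deriv a s : 0 < a < 1 -> is_derive (K0 a) s (cos s ^ 6 * sin s ^ 0 / (1 - a * sin s)).
Proof.
  intros Ha. generalize (SIN_bound s). intros [Hs1 Hs2].
  assert (H4 : 0 < 1 - a * sin s) by nra.
  assert (Hc : cos s ^ 2 = 1 - sin s ^ 2) by (generalize (trig1 s); lra).
  replace (cos s ^ 6 * sin s ^ 0 / (1 - a * sin s)) with
   ((1/a^6 - 3/a^4 + 3/a^2)+(1/a^5 - 3/a^3 + 3/a)*sin s+(1/a^4 - 3/a^2)*sin s^2+(1/a^3 - 3/a)*sin s^3+(1/a^2)*sin s^4+(1/a)*sin s^5 + (-1/a^6 + 3/a^4 - 3/a^2 + 1)/(1 - a*sin s)).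
  apply (Keven_deriv a (1/a^6 - 3/a^4 + 3/a^2) (1/a^5 - 3/a^3 + 3/a) (1/a^4 - 3/a^2) (1/a^3 - 3/a) (1/a^2) (1/a) (-1/a^6 + 3/a^4 - 3/a^2 + 1) s Ha).
  replace (cos s ^ 6) with ((cos s ^ 2)^3) by ring. rewrite Hc. field. lra.
Qed.

Lemma K2_deriv a s : 0 < a < 1 -> is_derive (K2 a) s (cos s ^ 4 * sin s ^ 2 / (1 - a * sin s)).
Proof.
  intros Ha. generalize (SIN_bound s). intros [Hs1 Hs2].
  assert (H4 : 0 < 1 - a * sin s) by nra.
  assert (Hc : cos s ^ 2 = 1 - sin s ^ 2) by (generalize (trig1 s); lra).
  replace (cos s ^ 4 * sin s ^ 2 / (1 - a * sin s)) with
   ((-1/a^6 + 2/a^4 - 1/a^2)+(-1/a^5 + 2/a^3 - 1/a)*sin s+(-1/a^4 + 2/a^2)*sin s^2+(-1/a^3 + 2/a)*sin s^3+(-1/a^2)*sin s^4+(-1/a)*sin s^5 + (1/a^6 - 2/a^4 + 1/a^2)/(1 - a*sin s)).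
  apply (Keven_deriv a (-1/a^6 + 2/a^4 - 1/a^2) (-1/a^5 + 2/a^3 - 1/a) (-1/a^4 + 2/a^2) (-1/a^3 + 2/a) (-1/a^2) (-1/a) (1/a^6 - 2/a^4 + 1/a^2) s Ha).
  replace (cos s ^ 4) with ((cos s ^ 2)^2) by ring. rewrite Hc. field. lra.
Qed.

Lemma K4_deriv a s : 0 < a < 1 -> is_derive (K4 a) s (cos s ^ 2 * sin s ^ 4 / (1 - a * sin s)).
Proof.
  intros Ha. generalize (SIN_bound s). intros [Hs1 Hs2].
  assert (H4 : 0 < 1 - a * sin s) by nra.
  assert (Hc : cos s ^ 2 = 1 - sin s ^ 2) by (generalize (trig1 s); lra).
  replace (cos s ^ 2 * sin s ^ 4 / (1 - a * sin s)) with
   ((1/a^6 - 1/a^4)+(1/a^5 - 1/a^3)*sin s+(1/a^4 - 1/a^2)*sin s^2+(1/a^3 - 1/a)*sin s^3+(1/a^2)*sin s^4+(1/a)*sin s^5 + (-1/a^6 + 1/a^4)/(1 - a*sin s)).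
  apply (Keven_deriv a (1/a^6 - 1/a^4) (1/a^5 - 1/a^3) (1/a^4 - 1/a^2) (1/a^3 - 1/a) (1/a^2) (1/a) (-1/a^6 + 1/a^4) s Ha).
  replace (cos s ^ 2) with ((cos s ^ 2)^1) by ring. rewrite Hc. field. lra.
Qed.

Lemma K1_deriv a s : 0 < a < 1 -> is_derive (K1 a) s (cos s ^ 5 * sin s ^ 1 / (1 - a * sin s)).
Proof.
  intros Ha. generalize (SIN_bound s). intros [Hs1 Hs2].
  assert (H4 : 0 < 1 - a * sin s) by nra.
  assert (Hc : cos s ^ 2 = 1 - sin s ^ 2) by (generalize (trig1 s); lra).
  replace (cos s ^ 5 * sin s ^ 1 / (1 - a * sin s)) with
   (cos s * ((-1/a^5 + 2/a^3 - 1/a)+(-1/a^4 + 2/a^2)*sin s+(-1/a^3 + 2/a)*sin s^2+(-1/a^2)*sin s^3+(-1/a)*sin s^4 + (1/a^5 - 2/a^3 + 1/a)/(1 - a*sin s))).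
  apply (Kodd_deriv a (-1/a^5 + 2/a^3 - 1/a) (-1/a^4 + 2/a^2) (-1/a^3 + 2/a) (-1/a^2) (-1/a) (1/a^5 - 2/a^3 + 1/a) s Ha).
  replace (cos s ^ 5) with (cos s * (cos s ^ 2)^2) by ring. rewrite Hc. field. lra.
Qed.

Lemma K3_deriv a s : 0 < a < 1 -> is_derive (K3 a) s (cos s ^ 3 * sin s ^ 3 / (1 - a * sin s)).
Proof.
  intros Ha. generalize (SIN_bound s). intros [Hs1 Hs2].
  assert (H4 : 0 < 1 - a * sin s) by nra.
  assert (Hc : cos s ^ 2 = 1 - sin s ^ 2) by (generalize (trig1 s); lra).
  replace (cos s ^ 3 * sin s ^ 3 / (1 - a * sin s)) with
   (cos s * ((1/a^5 - 1/a^3)+(1/a^4 - 1/a^2)*sin s+(1/a^3 - 1/a)*sin s^2+(1/a^2)*sin s^3+(1/a)*sin s^4 + (-1/a^5 + 1/a^3)/(1 - a*sin s))).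
  apply (Kodd_deriv a (1/a^5 - 1/a^3) (1/a^4 - 1/a^2) (1/a^3 - 1/a) (1/a^2) (1/a) (-1/a^5 + 1/a^3) s Ha).
  replace (cos s ^ 3) with (cos s * (cos s ^ 2)^1) by ring. rewrite Hc. field. lra.
Qed.

Lemma K5_deriv a s : 0 < a < 1 -> is_derive (K5 a) s (cos s ^ 1 * sin s ^ 5 / (1 - a * sin s)).
Proof.
  intros Ha. generalize (SIN_bound s). intros [Hs1 Hs2].
  assert (H4 : 0 < 1 - a * sin s) by nra.
  assert (Hc : cos s ^ 2 = 1 - sin s ^ 2) by (generalize (trig1 s); lra).
  replace (cos s ^ 1 * sin s ^ 5 / (1 - a * sin s)) with
   (cos s * ((-1/a^5)+(-1/a^4)*sin s+(-1/a^3)*sin s^2+(-1/a^2)*sin s^3+(-1/a)*sin s^4 + (1/a^5)/(1 - a*sin s))).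
  apply (Kodd_deriv a (-1/a^5) (-1/a^4) (-1/a^3) (-1/a^2) (-1/a) (1/a^5) s Ha).
  replace (cos s ^ 1) with (cos s * (cos s ^ 2)^0) by ring. rewrite Hc. field. lra.
Qed.

Definition Ksum C k a s :=
  ee0 C k * K0 a s + ee1 C k * K1 a s + ee2 C k * K2 a s + ee3 C k * K3 a s
  + ee4 C k * K4 a s + ee5 C k * K5 a s.

Definition Gfull C k z a s :=
  lam C k * z * (s + a * cos s) + z^4 * Hprim C k s - z^7 * Ksum C k a s.

Lemma Gfull_deriv C k z a s : 0 < a < 1 -> is_derive (Gfull C k z a) s (IntGen C k z a s).
Proof.
  intros Ha. generalize (SIN_bound s). intros [Hs1 Hs2].
  assert (H4 : 0 < 1 - a * sin s) by nra.
  unfold Gfull, Ksum. auto_derive.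
  { repeat split; try exact I;
    [ exists (hpoly C k (cos s) (sin s)); apply Hprim_deriv
    | eexists; apply K0_deriv; auto
    | eexists; apply K1_deriv; auto
    | eexists; apply K2_deriv; auto
    | eexists; apply K3_deriv; auto
    | eexists; apply K4_deriv; auto
    | eexists; apply K5_deriv; auto ]. }
  replace (Derive (fun x => Hprim C k x) s) with (hpoly C k (cos s) (sin s)) by (symmetry; apply is_derive_unique; apply Hprim_deriv).
  replace (Derive (fun x => K0 a x) s) with (cos s ^ 6 * sin s ^ 0 / (1 - a * sin s)) by (symmetry; apply is_derive_unique; apply K0_deriv; auto).
  replace (Derive (fun x => K1 a x) s) with (cos s ^ 5 * sin s ^ 1 / (1 - a * sin s)) by (symmetry; apply is_derive_unique; apply K1_deriv; auto).
  replace (Derive (fun x => K2 a x) s) with (cos s ^ 4 * sin s ^ 2 / (1 - a * sin s)) by (symmetry; apply is_derive_unique; apply K2_deriv; auto).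
  replace (Derive (fun x => K3 a x) s) with (cos s ^ 3 * sin s ^ 3 / (1 - a * sin s)) by (symmetry; apply is_derive_unique; apply K3_deriv; auto).
  replace (Derive (fun x => K4 a x) s) with (cos s ^ 2 * sin s ^ 4 / (1 - a * sin s)) by (symmetry; apply is_derive_unique; apply K4_deriv; auto).
  replace (Derive (fun x => K5 a x) s) with (cos s ^ 1 * sin s ^ 5 / (1 - a * sin s)) by (symmetry; apply is_derive_unique; apply K5_deriv; auto).
  unfold IntGen, kpoly. field. lra.
Qed.

Lemma IntGen_cont C k z a x : 0 < a < 1 -> continuous (IntGen C k z a) x.
Proof.
  intros Ha. generalize (SIN_bound x). intros [Hs1 Hs2].
  assert (H4 : 0 < 1 - a * sin x) by nra.
  apply (ex_derive_continuous (K:=R_AbsRing) (V:=R_NormedModule)).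
  unfold IntGen, hpoly, kpoly. auto_derive. lra.
Qed.

Definition Lval a q0 q2 q4 kap := 2*PI*q0 + PI*q2 + 3*PI/4*q4 + 2*PI*kap/bb a.

Lemma Keven_diff a q0 q1 q2 q3 q4 q5 kap : 0 < a < 1 ->
  Keven a q0 q1 q2 q3 q4 q5 kap (2*PI) - Keven a q0 q1 q2 q3 q4 q5 kap 0 = Lval a q0 q2 q4 kap.
Proof.
  intros Ha. destruct (bb_facts a Ha) as [Hb1 Hb2].
  unfold Keven, Lval, Phi. rewrite cos_2PI, sin_2PI, cos_0, sin_0. field. lra.
Qed.

Lemma Kodd_diff a q0 q1 q2 q3 q4 g : Kodd a q0 q1 q2 q3 q4 g (2*PI) - Kodd a q0 q1 q2 q3 q4 g 0 = 0.
Proof. unfold Kodd. rewrite sin_2PI, sin_0. ring. Qed.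

Lemma Hprim_diff C k : Hprim C k (2*PI) - Hprim C k 0 = 0.
Proof. unfold Hprim. rewrite cos_2PI, sin_2PI, cos_0, sin_0. ring. Qed.

Definition Ival C k a :=
  ee0 C k * Lval a (1/a^6 - 3/a^4 + 3/a^2) (1/a^4 - 3/a^2) (1/a^2) (-1/a^6 + 3/a^4 - 3/a^2 + 1)
  + ee2 C k * Lval a (-1/a^6 + 2/a^4 - 1/a^2) (-1/a^4 + 2/a^2) (-1/a^2) (1/a^6 - 2/a^4 + 1/a^2)
  + ee4 C k * Lval a (1/a^6 - 1/a^4) (1/a^4 - 1/a^2) (1/a^2) (-1/a^6 + 1/a^4).

Lemma IntGen_RInt C k z a : 0 < a < 1 ->
  is_RInt (IntGen C k z a) 0 (2*PI) (2*PI*lam C k*z - z^7 * Ival C k a).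
Proof.
  intros Ha.
  replace (2*PI*lam C k*z - z^7 * Ival C k a) with (minus (Gfull C k z a (2*PI)) (Gfull C k z a 0)).
  apply (is_RInt_derive (Gfull C k z a) (IntGen C k z a)).
  - intros x _. apply Gfull_deriv; auto.
  - intros x _. apply IntGen_cont; auto.
  - unfold minus, plus, opp. simpl.
    assert (D : Gfull C k z a (2*PI) + - Gfull C k z a 0 = lam C k * z * (2*PI)
      + z^4*(Hprim C k (2*PI) - Hprim C k 0) - z^7*(ee0 C k*(K0 a (2*PI) - K0 a 0)
      + ee1 C k*(K1 a (2*PI) - K1 a 0) + ee2 C k*(K2 a (2*PI) - K2 a 0)
      + ee3 C k*(K3 a (2*PI) - K3 a 0) + ee4 C k*(K4 a (2*PI) - K4 a 0)
      + ee5 C k*(K5 a (2*PI) - K5 a 0))).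
    { unfold Gfull, Ksum. rewrite cos_2PI, cos_0. ring. }
    rewrite D, Hprim_diff. unfold K0, K1, K2, K3, K4, K5.
    rewrite !Kodd_diff, !Keven_diff by exact Ha. unfold Ival. ring.
Qed.

Lemma minus_R (x y : R) : minus x y = x - y.
Proof. reflexivity. Qed.

Lemma Ysol_2PI z : Ysol (2*PI) z = 1.
Proof. unfold Ysol. rewrite sin_2PI. unfold Rpower. replace (1 - 3*z^3*0) with 1 by ring.
  rewrite ln_1, Rmult_0_r. apply exp_0. Qed.

Lemma f1_eq C z : 0 < z -> 3*z^3 < 1 -> f1 C z = 2*PI*lam C 1*z - z^7 * Ival C 1 (3*z^3).
Proof.
  intros Hz H3. unfold f1, y1. rewrite Ysol_2PI, Rmult_1_l.
  assert (Ha : 0 < 3*z^3 < 1) by (split; [apply Rmult_lt_0_compat; [lra| apply pow_lt; lra]|lra]).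
  rewrite (RInt_ext _ (IntGen C 1 z (3*z^3))).
  - apply is_RInt_unique. apply IntGen_RInt; auto.
  - intros x _. apply integrand1; auto.
Qed.

Lemma cond2_kpoly C c S : cond2 C -> kpoly C 1 c S = 0.
Proof.
  intros (H1 & H2 & H3 & H4 & H5 & H6 & H7).
  unfold kpoly, ee0, ee1, ee2, ee3, ee4, ee5. rewrite H1, H2, H3, H5, H6, H7. ring.
Qed.

Lemma cond2_lam C : cond2 C -> lam C 1 = 0.
Proof. intros (H1 & H2 & H3 & H4 & H5 & H6 & H7). exact H4. Qed.

Lemma y1_eq C z s : cond2 C -> 0 < z -> 3*z^3 < 1 ->
  y1 C s z = Ysol s z * (z^4 * (Hprim C 1 s - Hprim C 1 0)).
Proof.
  intros Hc Hz H3. unfold y1. f_equal.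
  rewrite (RInt_ext _ (fun u => z^4 * hpoly C 1 (cos u) (sin u))).
  - apply is_RInt_unique.
    replace (z^4 * (Hprim C 1 s - Hprim C 1 0)) with (minus (z^4 * Hprim C 1 s) (z^4 * Hprim C 1 0))
      by (unfold minus, plus, opp; simpl; ring).
    apply (is_RInt_derive (fun u => z^4 * Hprim C 1 u) (fun u => z^4 * hpoly C 1 (cos u) (sin u))).
    + intros x _. apply is_derive_scal. apply Hprim_deriv.
    + intros x _. apply (ex_derive_continuous (K:=R_AbsRing) (V:=R_NormedModule)).
      unfold hpoly. auto_derive. exact I.
  - intros x _. match goal with |- ?a = ?b => change (@eq R a b) end.
    rewrite integrand1 by auto. unfold IntGen.
    rewrite cond2_kpoly, cond2_lam by exact Hc. field.
    generalize (wpos z x Hz H3). lra.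
Qed.

Definition J2 C z a s := 2 * IntGen C 2 z a s
  + 4*z^7*(2*hpoly C 1 (cos s) (sin s) * (Hprim C 1 s - Hprim C 1 0)/(1 - a*sin s)
           + a * cos s * (Hprim C 1 s - Hprim C 1 0)^2/(1 - a*sin s)^2).

Lemma integrand2 C z s : cond2 C -> 0 < z -> 3*z^3 < 1 ->
  / Ysol s z * (2 * Fk C 2 s (rsol s z)
      + Derive_n (fun r => Fk C 0 s r) 2 (rsol s z) * (y1 C s z)^2
      + 2 * Derive (fun r => Fk C 1 s r) (rsol s z) * y1 C s z) = J2 C z (3*z^3) s.
Proof.
  intros Hc Hz H3.
  assert (Hr : 0 < rsol s z) by (unfold rsol; apply Rmult_lt_0_compat; [lra|apply rho_pos]).
  rewrite y1_eq, D2F0, DF1, F2_eq by (auto; lra || apply cond2_kpoly; auto).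
  rewrite Ysol_eq by auto. rewrite cond2_kpoly, cond2_lam by auto.
  unfold rsol. set (rho := Rpower (1 - 3*z^3*sin s) (-(1/3))).
  assert (Hw : 1 - 3*z^3*sin s = / rho^3) by (unfold rho; rewrite rho3; [rewrite Rinv_inv; reflexivity| |]; assumption).
  assert (Hr0 : rho <> 0) by (unfold rho; apply Rgt_not_eq, rho_pos).
  unfold J2, IntGen, Fgen. rewrite Hw. field. exact Hr0.
Qed.

Definition Jprim C z a s := 2 * Gfull C 2 z a s + 4*z^7*(Hprim C 1 s - Hprim C 1 0)^2/(1 - a*sin s).

Lemma Jprim_deriv C z a s : 0 < a < 1 -> is_derive (Jprim C z a) s (J2 C z a s).
Proof.
  intros Ha. generalize (SIN_bound s). intros [Hs1 Hs2].
  assert (H4 : 0 < 1 - a * sin s) by nra.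
  unfold Jprim. auto_derive.
  { repeat split; try exact I; try lra.
    - exists (IntGen C 2 z a s). apply Gfull_deriv; auto.
    - exists (hpoly C 1 (cos s) (sin s)); apply Hprim_deriv. }
  replace (Derive (fun x => Gfull C 2 z a x) s) with (IntGen C 2 z a s)
    by (symmetry; apply is_derive_unique; apply Gfull_deriv; auto).
  replace (Derive (fun x => Hprim C 1 x) s) with (hpoly C 1 (cos s) (sin s))
    by (symmetry; apply is_derive_unique; apply Hprim_deriv).
  unfold J2. field. lra.
Qed.

Lemma J2_cont C z a x : 0 < a < 1 -> continuous (J2 C z a) x.
Proof.
  intros Ha. generalize (SIN_bound x). intros [Hs1 Hs2].
  assert (H4 : 0 < 1 - a * sin x) by nra.
  apply (ex_derive_continuous (K:=R_AbsRing) (V:=R_NormedModule)).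
  unfold J2, IntGen, hpoly, kpoly, Hprim. auto_derive. repeat split; try exact I; try lra. rewrite Rmult_1_r. apply Rmult_integral_contrapositive; split; lra.
Qed.

Lemma f2_eq C z : cond2 C -> 0 < z -> 3*z^3 < 1 -> f2 C z = 2*PI*lam C 2*z - z^7 * Ival C 2 (3*z^3).
Proof.
  intros Hc Hz H3. unfold f2, y2. rewrite Ysol_2PI, Rmult_1_l.
  assert (Ha : 0 < 3*z^3 < 1) by (split; [apply Rmult_lt_0_compat; [lra| apply pow_lt; lra]|lra]).
  rewrite (RInt_ext _ (J2 C z (3*z^3))).
  - rewrite (is_RInt_unique _ _ _ (2*(2*PI*lam C 2*z - z^7 * Ival C 2 (3*z^3)))). field.
    replace (2*(2*PI*lam C 2*z - z^7 * Ival C 2 (3*z^3))) with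
      (minus (Jprim C z (3*z^3) (2*PI)) (Jprim C z (3*z^3) 0)).
    apply (is_RInt_derive (Jprim C z (3*z^3)) (J2 C z (3*z^3))).
    + intros x _. apply Jprim_deriv; auto.
    + intros x _. apply J2_cont; auto.
    + rewrite minus_R. unfold Jprim.
      generalize (IntGen_RInt C 2 z (3*z^3) Ha). intro HI.
      assert (HG : Gfull C 2 z (3*z^3) (2*PI) - Gfull C 2 z (3*z^3) 0 = 2*PI*lam C 2*z - z^7 * Ival C 2 (3*z^3)).
      { assert (HI2 : is_RInt (IntGen C 2 z (3*z^3)) 0 (2*PI)
           (minus (Gfull C 2 z (3*z^3) (2*PI)) (Gfull C 2 z (3*z^3) 0))).
        { apply (is_RInt_derive (Gfull C 2 z (3*z^3)) (IntGen C 2 z (3*z^3))).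
          intros x _; apply Gfull_deriv; auto. intros x _; apply IntGen_cont; auto. }
        pose proof (is_RInt_unique (V:=R_CompleteNormedModule) _ _ _ _ HI) as E1.
        pose proof (is_RInt_unique (V:=R_CompleteNormedModule) _ _ _ _ HI2) as E2.
        rewrite E1 in E2. rewrite E2. reflexivity. }
      replace (Hprim C 1 (2*PI)) with (Hprim C 1 0) by (generalize (Hprim_diff C 1); lra).
      match goal with |- ?a = ?b => change (@eq R a b) end. rewrite <- HG. rewrite sin_2PI, sin_0. field.
  - intros x _. match goal with |- ?a = ?b => change (@eq R a b) end.
    apply integrand2; auto.
Qed.

Lemma cube_lt x y : 0 < x -> 0 < y -> x < y -> x^3 < y^3.
Proof. intros. replace (y^3 - x^3) with ((y-x)*(y^2+x*y+x^2)) by ring.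
  assert (0 < y^2 + x*y + x^2) by nra.
  apply Rminus_gt_0_lt. replace (y^3 - x^3) with ((y-x)*(y^2+x*y+x^2)) by ring. apply Rmult_lt_0_compat; lra. Qed.

Lemma cube_lt_inv x y : 0 < x -> 0 < y -> x^3 < y^3 -> x < y.
Proof. intros Hx Hy H. destruct (Rlt_or_le x y) as [h|h]; auto.
  assert (y^3 <= x^3). { destruct (Req_dec x y). subst; lra. apply Rlt_le, cube_lt; lra. } lra. Qed.

Definition q3 := Rpower 3 (-(1/3)).
Lemma q3_pos : 0 < q3.
Proof. unfold q3, Rpower. apply exp_pos. Qed.
Lemma q3_cube : q3^3 = /3.
Proof.
  rewrite <- (Rpower_pow 3 _ q3_pos). unfold q3. rewrite Rpower_mult.
  replace (- (1/3) * INR 3) with (Ropp 1) by (simpl; field).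
  rewrite Rpower_Ropp, Rpower_1; lra.
Qed.

Lemma inD_iff z : inD z <-> 0 < z /\ 3*z^3 < 1.
Proof.
  unfold inD. fold q3. generalize q3_pos q3_cube. intros Hq Hq3. split.
  - intros [H1 H2]. split; auto. generalize (cube_lt _ _ H1 Hq H2). lra.
  - intros [H1 H2]. split; auto. apply cube_lt_inv; auto. lra.
Qed.

Definition Psi C k a := 2*PI*lam C k - a^2/9 * Ival C k a.

Lemma f1_Psi C z : inD z -> f1 C z = z * Psi C 1 (3*z^3).
Proof. intros H. apply inD_iff in H. destruct H. rewrite f1_eq by auto. unfold Psi. field. Qed.

Lemma f2_Psi C z : cond2 C -> inD z -> f2 C z = z * Psi C 2 (3*z^3).
Proof. intros Hc H. apply inD_iff in H. destruct H. rewrite f2_eq by auto. unfold Psi. field. Qed.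

Definition Hg1 (C : coeffs) k :=
  3 * ca C k 1 3 + ca C k 3 1 - 3 * cb C k 0 4 - cb C k 2 2 - 3 * cb C k 4 0 + 72 * lam C k.
Definition Hg2 (C : coeffs) k :=
  -4 * ca C k 1 3 + 4 * cb C k 0 4 + 4 * ca C k 3 1 - 4 * cb C k 2 2 - 12 * cb C k 4 0 + 288 * lam C k.
Definition Hg3 (C : coeffs) k :=
  5 * ca C k 1 3 - 9 * ca C k 3 1 - 5 * cb C k 0 4 + 9 * cb C k 2 2 - 5 * cb C k 4 0 + 504 * lam C k.
Definition Hg4 (C : coeffs) k :=
  -8 * ca C k 1 3 + 8 * ca C k 3 1 + 8 * cb C k 0 4 - 8 * cb C k 2 2 + 40 * cb C k 4 0 + 576 * lam C k.

Definition Pk C k s := Hg1 C k * s ^ 6 + Hg2 C k * s ^ 5 + Hg3 C k * s ^ 4 + Hg4 C k * s ^ 3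
     + Hg3 C k * s ^ 2 + Hg2 C k * s + Hg1 C k.
Definition Pif C k s := PI * Pk C k s / (36 * (1+s)^4 * (1+s^2)).
Definition Aof s := (1 - s^2)/(1 + s^2).

Lemma bb_Aof s : 0 < s < 1 -> bb (Aof s) = 2*s/(1+s^2).
Proof.
  intros Hs. unfold bb, Aof.
  replace (1 - ((1 - s^2)/(1+s^2))^2) with ((2*s/(1+s^2))^2) by (field; nra).
  apply sqrt_pow2. apply Rlt_le, Rdiv_lt_0_compat; nra.
Qed.

Lemma Psi_Aof C k s : 0 < s < 1 -> Psi C k (Aof s) = Pif C k s.
Proof.
  intros Hs. unfold Psi, Ival, Lval. rewrite bb_Aof by auto.
  unfold Pif, Pk, Hg1, Hg2, Hg3, Hg4, ee0, ee2, ee4, Aof.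
  field. repeat split; nra.
Qed.

Lemma Xpos s : 0 < s < 1 -> 0 < (1 - s ^ 2) / (3 * (1 + s ^ 2)).
Proof. intros. apply Rdiv_lt_0_compat; nra. Qed.

Lemma zofs_pos s : 0 < zofs s.
Proof. unfold zofs, Rpower. apply exp_pos. Qed.

Lemma zofs_cube s : 0 < s < 1 -> zofs s ^ 3 = (1 - s ^ 2) / (3 * (1 + s ^ 2)).
Proof.
  intros Hs. rewrite <- (Rpower_pow 3 _ (zofs_pos s)). unfold zofs. rewrite Rpower_mult.
  replace (1/3 * INR 3) with 1 by (simpl; field). apply Rpower_1. apply Xpos; auto.
Qed.

Lemma zofs_a s : 0 < s < 1 -> 3 * zofs s ^ 3 = Aof s.
Proof. intros Hs. rewrite zofs_cube by auto. unfold Aof. field. nra. Qed.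

Lemma zofs_inD s : 0 < s < 1 -> inD (zofs s).
Proof.
  intros Hs. apply inD_iff. split. apply zofs_pos. rewrite zofs_a by auto. unfold Aof.
  apply Rmult_lt_reg_r with (1+s^2). nra. unfold Rdiv. rewrite Rmult_assoc, Rinv_l by nra. nra.
Qed.

Lemma formula_eq C s : 0 < s < 1 -> f2_formula C s = zofs s * Pif C 2 s.
Proof.
  intros Hs.
  assert (HK : Rpower 3 (2/3) * Rpower (1 - s) (1/3) / (Rpower (1 + s) (11/3) * Rpower (1 + s ^ 2) (4/3))
     = 3 * zofs s / ((1+s)^4 * (1+s^2))).
  { apply ln_inv.
    - apply Rdiv_lt_0_compat; [apply Rmult_lt_0_compat|apply Rmult_lt_0_compat]; unfold Rpower; apply exp_pos.
    - apply Rdiv_lt_0_compat. apply Rmult_lt_0_compat; [lra|apply zofs_pos].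
      apply Rmult_lt_0_compat; [apply pow_lt|]; nra.
    - assert (P1 : 0 < 1 - s) by lra. assert (P2 : 0 < 1 + s) by lra. assert (P3 : 0 < 1 + s^2) by nra.
      assert (PA : forall x y, 0 < Rpower x y) by (intros; unfold Rpower; apply exp_pos).
      rewrite ln_div, ln_mult, ln_mult, ln_div, ln_mult, ln_mult; auto;
        try (apply Rmult_lt_0_compat; auto); try apply pow_lt; auto; try lra; try apply zofs_pos.
      all: try (apply Rmult_lt_0_compat; auto); try apply pow_lt; auto; try lra; try apply zofs_pos.
      rewrite !ln_Rpower. unfold zofs. rewrite ln_Rpower. rewrite ln_pow by lra.
      rewrite ln_div by (try nra; apply Rmult_lt_0_compat; lra).
      rewrite (ln_mult 3) by lra.
      replace (1 - s^2) with ((1-s)*(1+s)) by ring.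
      rewrite (ln_mult (1-s)) by lra. simpl INR. field. }
  unfold f2_formula, Pif, Pk, Hg1, Hg2, Hg3, Hg4, H1, H2, H3, H4.
  replace (PI * Rpower 3 (2 / 3) * Rpower (1 - s) (1 / 3) /
     (108 * Rpower (1 + s) (11 / 3) * Rpower (1 + s ^ 2) (4 / 3)))
   with (PI / 108 * (Rpower 3 (2/3) * Rpower (1 - s) (1/3) / (Rpower (1 + s) (11/3) * Rpower (1 + s ^ 2) (4/3)))).
  rewrite HK. field. nra.
  field. split; unfold Rpower; apply Rgt_not_eq, exp_pos.
Qed.

Lemma four_roots d0 d1 d2 d3 w1 w2 w3 w4 :
  w1 <> w2 -> w1 <> w3 -> w1 <> w4 -> w2 <> w3 -> w2 <> w4 -> w3 <> w4 ->
  (forall w, w = w1 \/ w = w2 \/ w = w3 \/ w = w4 -> d3*w^3 + d2*w^2 + d1*w + d0 = 0) ->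
  d0 = 0 /\ d1 = 0 /\ d2 = 0 /\ d3 = 0.
Proof.
  intros h12 h13 h14 h23 h24 h34 H.
  pose proof (H w1 ltac:(auto)) as E1. pose proof (H w2 ltac:(auto)) as E2.
  pose proof (H w3 ltac:(auto)) as E3. pose proof (H w4 ltac:(auto)) as E4.
  assert (A2 : d3*(w1^2+w1*w2+w2^2) + d2*(w1+w2) + d1 = 0).
  { apply (Rmult_eq_reg_l (w1 - w2)). 2: lra. rewrite Rmult_0_r.
    replace ((w1 - w2) * (d3*(w1^2+w1*w2+w2^2) + d2*(w1+w2) + d1)) with
      ((d3*w1^3 + d2*w1^2 + d1*w1 + d0) - (d3*w2^3 + d2*w2^2 + d1*w2 + d0)) by ring. lra. }
  assert (A3 : d3*(w1^2+w1*w3+w3^2) + d2*(w1+w3) + d1 = 0).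
  { apply (Rmult_eq_reg_l (w1 - w3)). 2: lra. rewrite Rmult_0_r.
    replace ((w1 - w3) * (d3*(w1^2+w1*w3+w3^2) + d2*(w1+w3) + d1)) with
      ((d3*w1^3 + d2*w1^2 + d1*w1 + d0) - (d3*w3^3 + d2*w3^2 + d1*w3 + d0)) by ring. lra. }
  assert (A4 : d3*(w1^2+w1*w4+w4^2) + d2*(w1+w4) + d1 = 0).
  { apply (Rmult_eq_reg_l (w1 - w4)). 2: lra. rewrite Rmult_0_r.
    replace ((w1 - w4) * (d3*(w1^2+w1*w4+w4^2) + d2*(w1+w4) + d1)) with
      ((d3*w1^3 + d2*w1^2 + d1*w1 + d0) - (d3*w4^3 + d2*w4^2 + d1*w4 + d0)) by ring. lra. }
  assert (B3 : d3*(w1+w2+w3) + d2 = 0).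
  { apply (Rmult_eq_reg_l (w2 - w3)). 2: lra. rewrite Rmult_0_r.
    replace ((w2 - w3) * (d3*(w1+w2+w3) + d2)) with
      ((d3*(w1^2+w1*w2+w2^2) + d2*(w1+w2) + d1) - (d3*(w1^2+w1*w3+w3^2) + d2*(w1+w3) + d1)) by ring. lra. }
  assert (B4 : d3*(w1+w2+w4) + d2 = 0).
  { apply (Rmult_eq_reg_l (w2 - w4)). 2: lra. rewrite Rmult_0_r.
    replace ((w2 - w4) * (d3*(w1+w2+w4) + d2)) with
      ((d3*(w1^2+w1*w2+w2^2) + d2*(w1+w2) + d1) - (d3*(w1^2+w1*w4+w4^2) + d2*(w1+w4) + d1)) by ring. lra. }
  assert (D3 : d3 = 0).
  { apply (Rmult_eq_reg_l (w3 - w4)). 2: lra. rewrite Rmult_0_r.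
    replace ((w3 - w4) * d3) with ((d3*(w1+w2+w3) + d2) - (d3*(w1+w2+w4) + d2)) by ring. lra. }
  subst d3. ring_simplify in B3. subst d2. ring_simplify in A2. subst d1.
  ring_simplify in E1. subst d0. repeat split; reflexivity.
Qed.

Definition sofz z := sqrt ((1 - 3*z^3)/(1 + 3*z^3)).

Lemma sofz_facts z : inD z -> 0 < sofz z < 1 /\ Aof (sofz z) = 3*z^3.
Proof.
  intros H. apply inD_iff in H. destruct H as [Hz H3].
  assert (Hp : 0 < z^3) by (apply pow_lt; lra).
  assert (Hq : 0 < (1 - 3*z^3)/(1 + 3*z^3)) by (apply Rdiv_lt_0_compat; lra).
  assert (Hq1 : (1 - 3*z^3)/(1 + 3*z^3) < 1).
  { apply Rmult_lt_reg_r with (1 + 3*z^3). lra. unfold Rdiv. rewrite Rmult_assoc, Rinv_l by lra. lra. }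
  unfold sofz. split. split.
  - apply sqrt_lt_R0; auto.
  - apply Rlt_le_trans with (sqrt 1); [apply sqrt_lt_1; lra | rewrite sqrt_1; lra].
  - unfold Aof. rewrite <- Rsqr_pow2, Rsqr_sqrt by lra. field. lra.
Qed.

Definition Qc C k w := Hg1 C k * w^3 + Hg2 C k * w^2 + (Hg3 C k - 3*Hg1 C k)*w + (Hg4 C k - 2*Hg2 C k).

Lemma Pk_Qc C k s : s <> 0 -> Pk C k s = s^3 * Qc C k (s + /s).
Proof. intros. unfold Pk, Qc. field. auto. Qed.

Lemma Pif_zero C k s : 0 < s < 1 -> Pif C k s = 0 -> Qc C k (s + /s) = 0.
Proof.
  intros Hs H. unfold Pif in H. rewrite Pk_Qc in H by lra.
  assert (0 < 36 * (1+s)^4 * (1+s^2)) by (apply Rmult_lt_0_compat; [apply Rmult_lt_0_compat; [lra|apply pow_lt; lra]|nra]).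
  assert (0 < s^3) by (apply pow_lt; lra).
  generalize PI_RGT_0. intro.
  apply Rmult_integral in H. destruct H as [H|H].
  - apply Rmult_integral in H. destruct H as [H|H]. lra.
    apply Rmult_integral in H. destruct H as [H|H]. lra. auto.
  - apply Rinv_neq_0_compat in H; [contradiction|lra].
Qed.

Definition wf z := sofz z + / sofz z.

Lemma wf_inj z1 z2 : inD z1 -> inD z2 -> wf z1 = wf z2 -> z1 = z2.
Proof.
  intros H1 H2 E. destruct (sofz_facts _ H1) as [[s1a s1b] A1]. destruct (sofz_facts _ H2) as [[s2a s2b] A2].
  unfold wf in E. set (s := sofz z1) in *. set (t := sofz z2) in *.
  assert (st : s = t).
  { assert (E2 : (s - t) * (s*t - 1) = 0).
    { apply (Rmult_eq_reg_r (/(s*t))). 2: apply Rinv_neq_0_compat; nra.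
      rewrite Rmult_0_l. replace ((s - t) * (s * t - 1) * / (s * t)) with ((s + /s) - (t + /t)) by (field; lra). lra. }
    apply Rmult_integral in E2. destruct E2 as [E2|E2]. lra. nra. }
  apply inD_iff in H1. apply inD_iff in H2.
  assert (E3 : z1^3 = z2^3). { rewrite st in A1. lra. }
  destruct (Rtotal_order z1 z2) as [h|[h|h]]; auto.
  - generalize (cube_lt z1 z2 ltac:(lra) ltac:(lra) h). lra.
  - generalize (cube_lt z2 z1 ltac:(lra) ltac:(lra) h). lra.
Qed.

Lemma F_at_sofz (F : R -> R) C k z : (forall z, inD z -> F z = z * Psi C k (3*z^3)) -> inD z ->
  F z = z * Pif C k (sofz z).
Proof.
  intros HF Hz. rewrite HF by auto. destruct (sofz_facts z Hz) as [Hs A].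
  rewrite <- A, Psi_Aof; auto.
Qed.

Lemma at_most3 (F : R -> R) C k : (forall z, inD z -> F z = z * Psi C k (3*z^3)) ->
  nonzero_on_D F -> at_most_simple_zeros F 3.
Proof.
  intros HF [z0 [Hz0 Hnz]] l Hnd Hl.
  destruct (Compare_dec.le_lt_dec (length l) 3) as [h|h]; auto. exfalso.
  destruct l as [|z1 [|z2 [|z3 [|z4 l']]]]; simpl in h; try lia.
  assert (Hr : forall z, In z (z1 :: z2 :: z3 :: z4 :: l') -> Qc C k (wf z) = 0).
  { intros z Hin. destruct (Hl z Hin) as [HD [HZ _]].
    destruct (sofz_facts z HD) as [Hs _].
    apply Pif_zero; auto. rewrite (F_at_sofz F C k z HF HD) in HZ.
    apply Rmult_integral in HZ. destruct HZ as [HZ|HZ]; auto.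
    apply inD_iff in HD. lra. }
  assert (Hne : forall x y, In x (z1 :: z2 :: z3 :: z4 :: l') -> In y (z1 :: z2 :: z3 :: z4 :: l') ->
      x <> y -> wf x <> wf y).
  { intros x y Hx Hy Hxy E. apply Hxy. apply wf_inj; auto. apply (Hl x Hx). apply (Hl y Hy). }
  inversion Hnd as [|? ? N1 Hnd1]. inversion Hnd1 as [|? ? N2 Hnd2]. inversion Hnd2 as [|? ? N3 Hnd3].
  simpl in N1, N2, N3.
  assert (Hall : Hg1 C k = 0 /\ Hg2 C k = 0 /\ Hg3 C k = 0 /\ Hg4 C k = 0).
  { destruct (four_roots (Hg4 C k - 2*Hg2 C k) (Hg3 C k - 3*Hg1 C k) (Hg2 C k) (Hg1 C k)
      (wf z1) (wf z2) (wf z3) (wf z4)) as (e0 & e1 & e2 & e3).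
    - apply Hne; simpl; try tauto; intro E; subst; tauto.
    - apply Hne; simpl; try tauto; intro E; subst; tauto.
    - apply Hne; simpl; try tauto; intro E; subst; tauto.
    - apply Hne; simpl; try tauto; intro E; subst; tauto.
    - apply Hne; simpl; try tauto; intro E; subst; tauto.
    - apply Hne; simpl; try tauto; intro E; subst; tauto.
    - intros w Hw. assert (Hq : Qc C k w = 0).
      { destruct Hw as [E|[E|[E|E]]]; subst w; apply Hr; simpl; tauto. }
      unfold Qc in Hq. lra.
    - lra. }
  apply Hnz. rewrite (F_at_sofz F C k z0 HF Hz0). unfold Pif, Pk.
  destruct Hall as (-> & -> & -> & ->). field.
  destruct (sofz_facts z0 Hz0) as [Hs _].
  repeat split; try nra; try (apply pow_nonzero; lra).
Qed.

Definition dP C k s := 6*Hg1 C k*s^5 + 5*Hg2 C k*s^4 + 4*Hg3 C k*s^3 + 3*Hg4 C k*s^2 + 2*Hg3 C k*s + Hg2 C k.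

Lemma Pif_deriv C k s : 0 < s < 1 -> is_derive (Pif C k) s
  (PI/36 * (dP C k s * ((1+s)^4*(1+s^2)) - Pk C k s * (4*(1+s)^3*(1+s^2) + (1+s)^4*(2*s)))
     / ((1+s)^4*(1+s^2))^2).
Proof.
  intros Hs. unfold Pif, Pk, dP. auto_derive.
  - repeat split; try exact I. repeat (apply Rmult_integral_contrapositive_currified); try lra; try nra.
  - field. split. nra. lra.
Qed.

Lemma Aof_deriv s : is_derive Aof s (-4*s/(1+s^2)^2).
Proof. unfold Aof. auto_derive. nra. field. nra. Qed.

Lemma Psi_ex_derive C k a : 0 < a < 1 -> ex_derive (Psi C k) a.
Proof.
  intros Ha. unfold Psi, Ival, Lval, bb. auto_derive. repeat split; try lra; repeat (apply Rmult_integral_contrapositive_currified); try lra; try nra; apply Rgt_not_eq, sqrt_lt_R0; nra.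
Qed.

Lemma inD_loc z : inD z -> locally z inD.
Proof.
  intros H. unfold inD in *. apply (locally_interval _ z 0 (Rpower 3 (-(1/3)))); simpl; try lra.
  intros y H1 H2. lra.
Qed.

Lemma scal_R (x y : R) : scal x y = x * y.
Proof. reflexivity. Qed.

Lemma simple_at (F : R -> R) C k s0 : 0 < s0 < 1 ->
  (forall z, inD z -> F z = z * Psi C k (3*z^3)) -> Pk C k s0 = 0 -> dP C k s0 <> 0 ->
  simple_zero F (zofs s0).
Proof.
  intros Hs HF HP HdP.
  set (z0 := zofs s0).
  assert (HD : inD z0) by (apply zofs_inD; auto).
  assert (Ha0 : 3*z0^3 = Aof s0) by (apply zofs_a; auto).
  assert (Hz0 : 0 < z0) by apply zofs_pos.
  assert (Haa : 0 < Aof s0 < 1) by (rewrite <- Ha0; apply inD_iff in HD; split; [|lra];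
     apply Rmult_lt_0_compat; [lra|apply pow_lt; lra]).
  assert (HPsi0 : Psi C k (Aof s0) = 0) by (rewrite Psi_Aof by auto; unfold Pif; rewrite HP; field; nra).
  set (G := fun z => z * Psi C k (3*z^3)).
  assert (Hloc : locally z0 (fun z => G z = F z)).
  { generalize (inD_loc z0 HD). apply filter_imp. intros z Hz. unfold G. rewrite HF; auto. }
  destruct (Psi_ex_derive C k (Aof s0) Haa) as [DPsi HDPsi].
  assert (HDne : DPsi <> 0).
  { assert (H1 : is_derive (fun s => Psi C k (Aof s)) s0 (scal (-4*s0/(1+s0^2)^2) DPsi))
      by exact (is_derive_comp (Psi C k) Aof s0 DPsi _ HDPsi (Aof_deriv s0)).
    assert (H2 : locally s0 (fun s => Psi C k (Aof s) = Pif C k s)).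
    { apply (locally_interval _ s0 0 1); simpl; try lra. intros y Hy1 Hy2. apply Psi_Aof. lra. }
    apply (is_derive_ext_loc _ _ _ _ H2) in H1.
    generalize (is_derive_unique _ _ _ H1) (is_derive_unique _ _ _ (Pif_deriv C k s0 Hs)).
    intros E1 E2. rewrite E1 in E2. rewrite HP in E2. intro Hd. rewrite Hd in E2.
    rewrite scal_R, Rmult_0_r in E2.
    assert (PI/36 * (dP C k s0 * ((1+s0)^4*(1+s0^2)) - 0 * (4*(1+s0)^3*(1+s0^2) + (1+s0)^4*(2*s0)))
     / ((1+s0)^4*(1+s0^2))^2 = 0) as E3 by (rewrite <- E2; reflexivity).
    assert (0 < (1+s0)^4) by (apply pow_lt; lra).
    assert (0 < 1 + s0^2) by nra.
    generalize PI_RGT_0; intro.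
    apply HdP. apply (Rmult_eq_reg_r (PI/36 / ((1+s0)^4*(1+s0^2)))).
    rewrite Rmult_0_l. rewrite <- E3. field. split; lra.
    apply Rgt_not_eq. apply Rdiv_lt_0_compat. lra. apply Rmult_lt_0_compat; lra. }
  assert (HG : is_derive G z0 (Psi C k (3*z0^3) + z0 * (9*z0^2 * DPsi))).
  { unfold G. auto_derive.
    - exists DPsi. replace (3 * (z0 * (z0 * (z0 * 1)))) with (Aof s0) by (rewrite <- Ha0; ring). exact HDPsi.
    - match goal with |- context[Derive ?f ?x] => replace (Derive f x) with DPsi end.
      ring_simplify. replace (z0 * (z0 * (z0 * 1))) with (z0^3) by ring. ring.
      symmetry; apply is_derive_unique.
      replace (3 * (z0 * (z0 * (z0 * 1)))) with (Aof s0) by (rewrite <- Ha0; ring). exact HDPsi. }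
  assert (HF0 : F z0 = 0).
  { rewrite HF by auto. rewrite Ha0, HPsi0. ring. }
  split; [exact HF0|split].
  - exists (Psi C k (3*z0^3) + z0 * (9*z0^2 * DPsi)). apply (is_derive_ext_loc _ _ _ _ Hloc HG).
  - rewrite <- (Derive_ext_loc _ _ _ Hloc). rewrite (is_derive_unique _ _ _ HG).
    rewrite Ha0, HPsi0. intro E.
    assert (0 < z0^3) by (apply pow_lt; lra).
    apply HDne. apply (Rmult_eq_reg_l (9*z0^3)). rewrite Rmult_0_r. rewrite <- E. ring. nra.
Qed.

Definition cbex (i j : nat) : R :=
  match i, j with 4%nat, 0%nat => -15/16 | 2%nat, 2%nat => 37/8 | 0%nat, 4%nat => -1 | _, _ => 0 end.
Definition Cex (kk : nat) : coeffs :=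
  mkCoeffs (fun k => if Nat.eqb k kk then -1/384 else 0) (fun _ _ _ => 0)
           (fun k i j => if Nat.eqb k kk then cbex i j else 0).

Lemma Hg_ex kk : Hg1 (Cex kk) kk = 1 /\ Hg2 (Cex kk) kk = -12 /\ Hg3 (Cex kk) kk = 50 /\ Hg4 (Cex kk) kk = -84.
Proof. unfold Hg1, Hg2, Hg3, Hg4, Cex. cbn. rewrite Nat.eqb_refl. unfold cbex. repeat split; field. Qed.

Definition Qd C k w := 3*Hg1 C k*w^2 + 2*Hg2 C k*w + (Hg3 C k - 3*Hg1 C k).

Lemma dP_Q C k s : s <> 0 -> dP C k s = 3*s^2*Qc C k (s + /s) + s*(s^2-1)*Qd C k (s + /s).
Proof. intros. unfold dP, Qc, Qd. field. auto. Qed.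

Definition sw w := (w - sqrt (w^2 - 4))/2.

Lemma sw_facts w : 2 < w -> 0 < sw w < 1 /\ sw w + / sw w = w.
Proof.
  intros Hw. assert (Hr0 : 0 <= w^2 - 4) by nra.
  generalize (sqrt_pos (w^2-4)) (sqrt_sqrt (w^2-4) Hr0). set (r := sqrt (w^2-4)). intros H1 H2.
  assert (Hrw : r < w) by nra.
  assert (Hr2 : w - 2 < r) by nra.
  unfold sw. fold r. split. split; lra.
  set (s := (w - r)/2).
  assert (Hs : 0 < s) by (unfold s; lra).
  assert (E : s^2 - w*s + 1 = 0).
  { unfold s. replace (((w - r) / 2) ^ 2 - w * ((w - r) / 2) + 1) with ((r*r - (w^2-4))/4) by field.
    rewrite H2. field. }
  apply (Rmult_eq_reg_r s); [|lra]. rewrite Rmult_plus_distr_r, Rinv_l by lra. nra.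
Qed.

Lemma sofz_zofs s : 0 < s < 1 -> sofz (zofs s) = s.
Proof.
  intros Hs. unfold sofz. rewrite zofs_a by auto. unfold Aof.
  replace ((1 - (1 - s^2)/(1+s^2))/(1 + (1 - s^2)/(1+s^2))) with (s^2) by (field; nra).
  apply sqrt_pow2. lra.
Qed.

Lemma ex_zeros (F : R -> R) kk : (forall z, inD z -> F z = z * Psi (Cex kk) kk (3*z^3)) ->
  nonzero_on_D F /\ has_simple_zeros F 3.
Proof.
  intros HF. destruct (Hg_ex kk) as (h1 & h2 & h3 & h4).
  assert (HQ : forall w, Qc (Cex kk) kk w = (w-3)*(w-4)*(w-5)) by (intros; unfold Qc; rewrite h1, h2, h3, h4; ring).
  assert (HQd : forall w, Qd (Cex kk) kk w = 3*w^2 - 24*w + 47) by (intros; unfold Qd; rewrite h1, h2, h3; ring).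
  split.
  - exists (zofs (1/2)). split. apply zofs_inD; lra.
    rewrite (F_at_sofz F _ _ _ HF) by (apply zofs_inD; lra). rewrite sofz_zofs by lra.
    unfold Pif. rewrite Pk_Qc, HQ by lra.
    apply Rmult_integral_contrapositive_currified. apply Rgt_not_eq, zofs_pos.
    generalize PI_RGT_0; intro. unfold Rdiv.
    apply Rmult_integral_contrapositive_currified.
    apply Rmult_integral_contrapositive_currified. lra.
    replace (/ (1/2)) with 2 by field. apply Rmult_integral_contrapositive_currified. apply pow_nonzero; lra. lra.
    apply Rinv_neq_0_compat. apply Rgt_not_eq. apply Rmult_lt_0_compat. apply Rmult_lt_0_compat. lra. apply pow_lt; lra. nra.
  - assert (Hz : forall w, 2 < w -> Qc (Cex kk) kk w = 0 -> Qd (Cex kk) kk w <> 0 ->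
       inD (zofs (sw w)) /\ simple_zero F (zofs (sw w))).
    { intros w Hw HQ0 HQd0. destruct (sw_facts w Hw) as [Hs Hsw]. split. apply zofs_inD; auto.
      apply (simple_at F (Cex kk) kk); auto.
      rewrite Pk_Qc by lra. rewrite Hsw, HQ0. ring.
      rewrite dP_Q by lra. rewrite Hsw, HQ0. intro E.
      assert (0 < sw w) by lra. assert (sw w ^2 - 1 < 0) by nra.
      apply HQd0. apply (Rmult_eq_reg_l (sw w * (sw w ^2 - 1))). rewrite Rmult_0_r. lra.
      apply Rmult_integral_contrapositive_currified; lra. }
    assert (Hwf : forall w, 2 < w -> wf (zofs (sw w)) = w).
    { intros w Hw. destruct (sw_facts w Hw) as [Hs Hsw]. unfold wf. rewrite sofz_zofs; auto. }
    exists (zofs (sw 3) :: zofs (sw 4) :: zofs (sw 5) :: nil). split; [|split].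
    + assert (D : forall u v, 2 < u -> 2 < v -> u <> v -> zofs (sw u) <> zofs (sw v)).
      { intros u v Hu Hv Huv E. apply Huv. rewrite <- (Hwf u Hu), <- (Hwf v Hv), E. reflexivity. }
      constructor. simpl. intros [E|[E|E]]; try contradiction; symmetry in E; revert E; apply D; lra.
      constructor. simpl. intros [E|E]; try contradiction; symmetry in E; revert E; apply D; lra.
      constructor. simpl. tauto. constructor.
    + reflexivity.
    + intros z Hin. simpl in Hin. destruct Hin as [E|[E|[E|E]]]; try contradiction; subst z;
      apply Hz; try lra; try (rewrite HQ; ring); rewrite HQd; lra.
Qed.

Lemma part2a C : cond2 C -> zero_on_D (f1 C).
Proof.
  intros Hc z Hz. rewrite f1_Psi by auto. unfold Psi, Ival.
  destruct Hc as (H1 & H2 & H3 & H4 & H5 & H6 & H7).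
  unfold ee0, ee2, ee4. rewrite H4, H3, H2, H1. ring.
Qed.

Lemma cond2_ex : cond2 (Cex 2).
Proof. unfold cond2, Cex. cbn. repeat split; reflexivity. Qed.

Theorem mainTheorem10 :
  averaging_yields_exactly (fun _ => True) f1 3 /\
  (forall C, cond2 C -> zero_on_D (f1 C)) /\
  averaging_yields_exactly (fun C => cond2 C /\ zero_on_D (f1 C)) f2 3 /\
  (forall C s, cond2 C -> 0 < s < 1 -> f2 C (zofs s) = f2_formula C s).
Proof.
  split; [|split; [|split]].
  - split.
    + intros C _ Hnz. apply (at_most3 (f1 C) C 1); auto. intros; apply f1_Psi; auto.
    + exists (Cex 1). split; auto. apply (ex_zeros (f1 (Cex 1)) 1). intros; apply f1_Psi; auto.
  - exact part2a.
  - split.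
    + intros C [Hc _] Hnz. apply (at_most3 (f2 C) C 2); auto. intros; apply f2_Psi; auto.
    + exists (Cex 2). split. split. apply cond2_ex. apply part2a, cond2_ex.
      apply (ex_zeros (f2 (Cex 2)) 2). intros; apply f2_Psi; auto. apply cond2_ex.
  - intros C s Hc Hs. rewrite f2_Psi by (auto; apply zofs_inD; auto).
    rewrite zofs_a, Psi_Aof by auto. rewrite formula_eq by auto. reflexivity.
Qed.
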